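(* (i) If $C$ is a self-orthogonal linear code over $\mathbb{Z}_4+u\mathbb{Z}_4$, then for every codeword $c\in C$ and each $i\in\{1,2\}$, the number $n_{\mathfrak{U}_i}(c)$ of coordinates of $c$ lying in $\mathfrak{U}_i$ is even. (ii) If $C$ is a self-dual code over $\mathbb{Z}_4+u\mathbb{Z}_4$ of length $n$, then the vector $(2u,2u,\dots,2u)$ of length $n$ belongs to $C$.
   Context: $\mathbb{Z}_4+u\mathbb{Z}_4$ is the commutative ring of characteristic $4$ with $u^2=0$. A linear code of length $n$ is a submodule $C$ of $(\mathbb{Z}_4+u\mathbb{Z}_4)^n$; its dual $C^\perp$ is taken with respect to the Euclidean inner product $\sum_i x_iy_i$ computed in the ring; $C$ is self-orthogonal if $C\subseteq C^\perp$ and self-dual if $C=C^\perp$. The units of first type are $\mathfrak{U}_1=\{1,3,1+2u,3+2u\}$ and the units of second type are $\mathfrak{U}_2=\{1+u,3+u,1+3u,3+3u\}$. *)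

(* Defs.v *)
From mathcomp Require Import all_boot all_algebra.
Set Implicit Arguments. Unset Strict Implicit. Unset Printing Implicit Defensive.
Import GRing.Theory.
Local Open Scope ring_scope.

(* The ring Z4 + u Z4 (u^2 = 0): the pair (a, b) represents a + u b. *)
Definition R4 : finType := ('Z_4 * 'Z_4)%type.

Definition r4add (x y : R4) : R4 := (x.1 + y.1, x.2 + y.2).
Definition r4mul (x y : R4) : R4 := (x.1 * y.1, x.1 * y.2 + x.2 * y.1).
Definition r4zero : R4 := (0, 0).

Definition word (n : nat) := {ffun 'I_n -> R4}.

Definition linear_code (n : nat) (C : {set word n}) : Prop :=
  [ffun=> r4zero] \in C /\
  (forall x y, x \in C -> y \in C -> [ffun i => r4add (x i) (y i)] \in C) /\
  (forall (a : R4) x, x \in C -> [ffun i => r4mul a (x i)] \in C).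

Definition inner (n : nat) (x y : word n) : R4 :=
  \big[r4add/r4zero]_(i < n) r4mul (x i) (y i).

Definition dual (n : nat) (C : {set word n}) : {set word n} :=
  [set y | [forall x in C, inner x y == r4zero]].

Definition self_orthogonal (n : nat) (C : {set word n}) : Prop := C \subset dual C.
Definition self_dual (n : nat) (C : {set word n}) : Prop := C = dual C.

Definition U1 : {set R4} := [set (1, 0); (3%:R, 0); (1, 2%:R); (3%:R, 2%:R)].
Definition U2 : {set R4} := [set (1, 1); (3%:R, 1); (1, 3%:R); (3%:R, 3%:R)].

Definition nU (U : {set R4}) (n : nat) (c : word n) : nat := #|[set i | c i \in U]|.

(* Main.v *)
Require Import Defs.
From mathcomp Require Import all_boot all_algebra.
Local Open Scope ring_scope.
Import GRing.Theory.
Lemma k1 (z : R4) : (z.1*z.1 = ((z \in U1) + (z \in U2))%N%:R) /\ (z.1*z.2+z.2*z.1 = (2*(z \in U2))%N%:R).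
Proof. rewrite /U1 /U2 !inE; case: z => [[[|[|[|[|?]]]] ?] [[|[|[|[|?]]]] ?]] //; split; apply/eqP => //. Qed.
Lemma k2 (a : 'Z_4) : 2%:R * a = 2%:R * (a*a).
Proof. case: a => [[|[|[|[|?]]]] ?] //; apply/eqP => //. Qed.
Lemma k3 (k : nat) : ((k%:R : 'Z_4) == 0) = (4 %| k)%N.
Proof. by rewrite -val_eqE /= val_Zp_nat. Qed.
Lemma fstE n (x y : word n) : (inner x y).1 = \sum_(i < n) (x i).1 * (y i).1.
Proof. rewrite /inner. by apply: (big_morph fst) => //. Qed.
Lemma sndE n (x y : word n) : (inner x y).2 = \sum_(i < n) ((x i).1 * (y i).2 + (x i).2 * (y i).1).
Proof. rewrite /inner. by apply: (big_morph snd) => //. Qed.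
Lemma cardE_aux n (P : pred (ordinal n)) : (\sum_(i < n) (P i : nat) = #|[set i | P i]|)%N.
Proof. by rewrite -sum1_card [RHS]big_mkcond /=; apply: eq_bigr => i _; rewrite inE; case: (P i). Qed.
Lemma cardE n (P : pred 'I_n) : (\sum_(i < n) (P i : nat)%:R : 'Z_4) = #|[set i | P i]|%:R.
Proof. by rewrite -natr_sum cardE_aux. Qed.
From mathcomp Require Import zify.
Lemma selfz n (C : {set word n}) c : c \in C -> c \in dual C -> inner c c = r4zero.
Proof. move=> cC; rewrite inE => /forall_inP H; exact/eqP/H. Qed.

Lemma part1 n (c : word n) : inner c c = r4zero -> ~~ odd (nU U1 c) /\ ~~ odd (nU U2 c).
Proof.
move=> H.
have H1 : (inner c c).1 = 0 by rewrite H.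
have H2 : (inner c c).2 = 0 by rewrite H.
rewrite fstE in H1; rewrite sndE in H2.
move: H1; under eq_bigr => i _ do rewrite (proj1 (k1 (c i))) natrD; move=> H1.
move: H2; under eq_bigr => i _ do rewrite (proj2 (k1 (c i))) natrM; move=> H2.
rewrite big_split /= (cardE _ (fun i => c i \in U1)) (cardE _ (fun i => c i \in U2)) -natrD in H1.
rewrite -mulr_sumr (cardE _ (fun i => c i \in U2)) -natrM in H2.
move/eqP: H1; move/eqP: H2; rewrite !k3 /nU.
lia.
Qed.

Lemma part2 n (C : {set word n}) : C = dual C -> [ffun=> ((0 : 'Z_4), (2%:R : 'Z_4))] \in C.
Proof.
move=> E; rewrite E inE; apply/forall_inP => x xC.
have H : inner x x = r4zero by apply: (@selfz _ C x xC); rewrite -E.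
have H1 : (inner x x).1 = 0 by rewrite H.
rewrite fstE in H1.
have -> : inner x [ffun=> ((0 : 'Z_4), (2%:R : 'Z_4))] = r4zero.
  apply: injective_projections; rewrite /= ?fstE ?sndE.
    by apply: big1 => i _; rewrite ffunE mulr0.
  under eq_bigr => i _ do rewrite ffunE /= mulr0 addr0 mulrC k2.
  by rewrite -mulr_sumr H1 mulr0.
by [].
Qed.

Theorem theorem4p2 :
  (forall (n : nat) (C : {set word n}),
      linear_code C -> self_orthogonal C ->
      forall c, c \in C -> ~~ odd (nU U1 c) /\ ~~ odd (nU U2 c)) /\
  (forall (n : nat) (C : {set word n}),
      linear_code C -> self_dual C ->
      [ffun=> ((0 : 'Z_4), (2%:R : 'Z_4))] \in C).
Proof.
split.
  move=> n C _ /subsetP SO c cC; apply: part1; apply: selfz cC (SO _ cC).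
by move=> n C _ E; apply: part2.
Qed.
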